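(* For each $n\ge0$ there is an exact sequence of $k$-modules \[0\leftarrow k\xleftarrow{\varepsilon}k\bigl[\mathrm{Hom}_{\mathcal{IF}(as)}([n],[0])\bigr]\xleftarrow{\rho}k\bigl[\mathrm{Hom}_{\mathcal{IF}(as)}([n],[2])\bigr],\] where $\varepsilon(f)=1_k$ on generators and $\rho(g)=\mu_2\circ g-\nu\circ g$ on generators, both extended $k$-linearly.
   Context: Let $k$ be a commutative ring and $C_2=\{1,t\}$. The category $\mathcal{IF}(as)$ of involutive non-commutative sets: objects $[n]=\{0,\dots,n\}$, $n\ge0$; a morphism $f:[n]\to[m]$ is a map of sets together with a total order on each fibre $f^{-1}(i)$ and a $C_2$-label on each element of $[n]$ (so each fibre is a $C_2$-labelled ordered set). For a $C_2$-labelled ordered set $S$, $S^t$ denotes $S$ with the order reversed and all labels multiplied by $t$. The composite $g\circ f$ of $f:[n]\to[m]$ and $g:[m]\to[l]$ has the composite underlying map and, for $i\in[l]$ with $g^{-1}(i)=\{j_1<\dots<j_r\}$, fibre the concatenation $S_1<\dots<S_r$ where $S_s=f^{-1}(j_s)$ if $j_s$ has label $1$ and $S_s=f^{-1}(j_s)^t$ if $j_s$ has label $t$. For $n\ge0$, $\mu_n:[n]\to[0]$ is given by $\mu_n^{-1}(0)=\{0^1<1^1<\dots<n^1\}$ (superscripts are labels), and $\nu:[2]\to[0]$ is given by $\nu^{-1}(0)=\{2^1<1^t<0^1\}$. $k[S]$ denotes the free $k$-module on a set $S$. *)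

(* Defs.v *)
From mathcomp Require Import all_boot all_order all_algebra.
Set Implicit Arguments. Unset Strict Implicit. Unset Printing Implicit Defensive.
Import GRing.Theory.
Local Open Scope ring_scope.

(* [n] = {0,...,n} is 'I_n.+1.  C2 = {1,t} is encoded by bool: false = 1, true = t.
   A morphism [n] -> [m] of IF(as) is encoded by, for each x in [n], a triple
   (target f(x), C2-label of x, position of x in its fibre), where the positions
   in each fibre are pairwise distinct and smaller than the size of the fibre,
   i.e. they enumerate the fibre in its total order as 0,1,...,|fibre|-1.
   This encoding is a bijection with the morphisms of IF(as). *)
Definition is_mor (n m : nat) (d : {ffun 'I_n.+1 -> 'I_m.+1 * bool * 'I_n.+1}) : bool :=
  [forall x, forall y,
      ((d x).1.1 == (d y).1.1) && ((d x).2 == (d y).2) ==> (x == y)]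
  && [forall x, ((d x).2 < #|[pred y | (d y).1.1 == (d x).1.1]|)%N].

Definition IFHom (n m : nat) := {d : {ffun 'I_n.+1 -> 'I_m.+1 * bool * 'I_n.+1} | is_mor d}.

Section HomOps.
Variables n m l : nat.

Definition tgt (h : IFHom n m) (x : 'I_n.+1) : 'I_m.+1 := (val h x).1.1.
Definition lab (h : IFHom n m) (x : 'I_n.+1) : bool := (val h x).1.2.
Definition pos (h : IFHom n m) (x : 'I_n.+1) : 'I_n.+1 := (val h x).2.

Definition fibre (h : IFHom n m) (i : 'I_m.+1) : seq ('I_n.+1 * bool) :=
  [seq (x, lab h x) | x <- sort (fun x y => (pos h x <= pos h y)%N)
                                 [seq x <- enum 'I_n.+1 | tgt h x == i]].

(* a morphism is determined by the list of its labelled ordered fibres *)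
Definition fibres (h : IFHom n m) : seq (seq ('I_n.+1 * bool)) :=
  [seq fibre h i | i <- enum 'I_m.+1].

End HomOps.

(* S^t : reversed order, all labels multiplied by t *)
Definition twist (T : Type) (S : seq (T * bool)) : seq (T * bool) :=
  rev [seq (p.1, ~~ p.2) | p <- S].

Definition comp_fibres (n m l : nat) (g : IFHom m l) (f : IFHom n m)
  : seq (seq ('I_n.+1 * bool)) :=
  [seq flatten [seq (if jb.2 then twist (fibre f jb.1) else fibre f jb.1)
               | jb <- fibre g i]
  | i <- enum 'I_l.+1].

Definition mu_data (n : nat) : {ffun 'I_n.+1 -> 'I_1 * bool * 'I_n.+1} :=
  [ffun x => (ord0, false, x)].

Lemma mu_is_mor (n : nat) : is_mor (mu_data n).
Proof.
apply/andP; split.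
  apply/forallP => x; apply/forallP => y; by rewrite !ffunE /=; apply/implyP.
apply/forallP => x; rewrite !ffunE /=.
rewrite (@eq_card _ _ 'I_n.+1) ?card_ord ?ltn_ord //.
by move=> y; rewrite !inE ffunE.
Qed.

Definition mu (n : nat) : IFHom n 0 := exist _ (mu_data n) (mu_is_mor n).

(* nu : [2] -> [0], fibre 2^1 < 1^t < 0^1 *)
Definition nu_data : {ffun 'I_3 -> 'I_1 * bool * 'I_3} :=
  [ffun x => (ord0, nat_of_ord x == 1%N, rev_ord x)].

Lemma nu_is_mor : is_mor nu_data.
Proof.
apply/andP; split.
  apply/forallP => x; apply/forallP => y; rewrite !ffunE /=.
  by apply/implyP => /eqP /rev_ord_inj ->.
apply/forallP => x; rewrite !ffunE /=.
rewrite (@eq_card _ _ 'I_3) ?card_ord ?(ltn_ord (rev_ord x)) //.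
by move=> y; rewrite !inE ffunE.
Qed.

Definition nu : IFHom 2 0 := exist _ nu_data nu_is_mor.

(* Free k-module k[S] on a finite set S: {ffun S -> k} (coefficient functions). *)

(* generator of the morphism [n] -> [0] with prescribed fibres *)
Definition gen_of_fibres (k : pzRingType) (n : nat) (F : seq (seq ('I_n.+1 * bool)))
  : {ffun IFHom n 0 -> k} :=
  [ffun h => (fibres h == F)%:R].

Definition epsIF (k : comPzRingType) (n : nat) (c : {ffun IFHom n 0 -> k}) : k :=
  \sum_(h : IFHom n 0) c h.

Definition rhoIF (k : comPzRingType) (n : nat) (d : {ffun IFHom n 2 -> k})
  : {ffun IFHom n 0 -> k} :=
  [ffun h => \sum_(g : IFHom n 2)
      d g * (gen_of_fibres k (comp_fibres (mu 2) g) h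
             - gen_of_fibres k (comp_fibres nu g) h)].

(* Main.v *)
Require Import Defs.
From mathcomp Require Import all_boot all_order all_algebra.
From mathcomp Require Import zify.
Set Implicit Arguments. Unset Strict Implicit. Unset Printing Implicit Defensive.
Import GRing.Theory.
Local Open Scope ring_scope.

Section Fib.
Variables n m : nat.
Implicit Types h : IFHom n m.

Definition fl h i := [seq x <- enum 'I_n.+1 | tgt h x == i].
Definition sfl h i := sort (relpre (fun x => nat_of_ord (pos h x)) leq) (fl h i).

Lemma fibre_fst h i : map fst (fibre h i) = sfl h i.
Proof. by rewrite /fibre -map_comp map_id_in. Qed.

Lemma fibreE h i : fibre h i = [seq (x, lab h x) | x <- sfl h i].
Proof. by []. Qed.

Lemma mem_sfl h i x : (x \in sfl h i) = (tgt h x == i).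
Proof. by rewrite mem_sort mem_filter mem_enum andbT. Qed.

Lemma uniq_sfl h i : uniq (sfl h i).
Proof. by rewrite sort_uniq filter_uniq // enum_uniq. Qed.

Lemma size_fl h i : size (fl h i) = #|[pred y | tgt h y == i]|.
Proof.
have /card_uniqP <- : uniq (fl h i) by rewrite filter_uniq // enum_uniq.
by apply: eq_card => y; rewrite !inE mem_filter mem_enum andbT.
Qed.

Lemma pos_inj h x y : tgt h x = tgt h y -> pos h x = pos h y -> x = y.
Proof.
rewrite /tgt /pos => e1 e2.
case: h e1 e2 => d /= /andP [/forallP H1 _] e1 e2.
by move: (H1 x) => /forallP /(_ y); rewrite e1 e2 !eqxx /= => /eqP.
Qed.

Lemma pos_lt h x : (pos h x < size (fl h (tgt h x)))%N.
Proof.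
rewrite size_fl /pos /tgt; case: h => d /= /andP [_ /forallP /(_ x)].
by [].
Qed.

Lemma map_pos_sfl h i :
  map (fun x => nat_of_ord (pos h x)) (sfl h i) = iota 0 (size (fl h i)).
Proof.
rewrite /sfl -sort_map.
have <- : sort leq (iota 0 (size (fl h i))) = iota 0 (size (fl h i)).
  by apply: sorted_sort; [exact: leq_trans | exact: iota_sorted].
apply/perm_sortP; [exact: leq_total | exact: leq_trans | exact: anti_leq |].
have U : uniq [seq nat_of_ord (pos h x) | x <- fl h i].
  rewrite map_inj_in_uniq; first by rewrite /fl filter_uniq // enum_uniq.
  move=> x y; rewrite !mem_filter => /andP[ex _] /andP[ey _] e.
  apply: (pos_inj (h:=h)); first by rewrite (eqP ex) (eqP ey).
  by apply: val_inj.
apply: uniq_perm => //; first exact: iota_uniq.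
have sub : {subset [seq nat_of_ord (pos h x) | x <- fl h i] <= iota 0 (size (fl h i))}.
  move=> z /mapP [x]; rewrite mem_filter => /andP [ex _] ->.
  by rewrite mem_iota add0n /= -(eqP ex) pos_lt.
have sz : (size (iota 0 (size (fl h i))) <= size [seq nat_of_ord (pos h x) | x <- fl h i])%N.
  by rewrite size_iota size_map.
by have [_ S] := uniq_min_size U sub sz.
Qed.

Lemma pos_index h x : nat_of_ord (pos h x) = index x (sfl h (tgt h x)).
Proof.
have mx : x \in sfl h (tgt h x) by rewrite mem_sfl.
have := map_pos_sfl h (tgt h x).
move/(congr1 (fun s => nth 0%N s (index x (sfl h (tgt h x))))).
rewrite (nth_map x) ?index_mem // nth_index // nth_iota ?add0n //.
by rewrite (_ : size (fl h (tgt h x)) = size (sfl h (tgt h x))) ?index_mem // /sfl size_sort.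
Qed.

End Fib.

Lemma seq_eq_index (T : eqType) (s1 s2 : seq T) :
  uniq s1 -> uniq s2 -> s1 =i s2 ->
  {in s1, forall x, index x s1 = index x s2} -> s1 = s2.
Proof.
move=> u1 u2 e hi.
have sz : size s1 = size s2 by apply: perm_size; apply: uniq_perm.
case: s1 u1 e hi sz => [|x0 s] u1 e hi sz.
  by case: s2 {hi u2 e} sz.
apply: (eq_from_nth (x0 := x0) sz) => j lj.
have mj : nth x0 (x0 :: s) j \in x0 :: s by rewrite mem_nth.
set y := nth x0 (x0 :: s) j in mj *.
have iy : index y s2 = j by rewrite -hi // index_uniq.
have ys2 : y \in s2 by rewrite -e.
by rewrite -iy nth_index.
Qed.

Lemma flatten_uniq_blocks (I T : eqType) (r : seq I) (F : I -> seq T) i j x :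
  uniq (flatten (map F r)) -> i \in r -> j \in r -> x \in F i -> x \in F j -> i = j.
Proof.
elim: r => [|a r IH] //= U.
move: U; rewrite cat_uniq => /and3P [_ nh U].
have inf k : k \in r -> x \in F k -> x \in flatten (map F r).
  by move=> kr xk; apply/flattenP; exists (F k) => //; apply: map_f.
rewrite !in_cons => /orP [/eqP -> | ir] /orP [/eqP -> | jr] xi xj //.
- by case/negP: nh; apply/hasP; exists x => //; apply: inf xj.
- by case/negP: nh; apply/hasP; exists x => //; apply: inf xi.
- exact: IH.
Qed.

Lemma flatten_uniq_block (I T : eqType) (r : seq I) (F : I -> seq T) i :
  uniq (flatten (map F r)) -> i \in r -> uniq (F i).
Proof.
elim: r => [|a r IH] //= U.
move: U; rewrite cat_uniq => /and3P [ua _ U].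
by rewrite in_cons => /orP [/eqP -> | ir] //; apply: IH.
Qed.

Section Uniq.
Variables n m : nat.

Lemma valE (h : IFHom n m) x : val h x = (tgt h x, lab h x, pos h x).
Proof. by rewrite /tgt /lab /pos; case: (val h x) => [[]]. Qed.

Lemma lab_nth (h : IFHom n m) x :
  lab h x = nth false (map snd (fibre h (tgt h x))) (index x (sfl h (tgt h x))).
Proof.
rewrite fibreE -map_comp (nth_map x) ?nth_index // ?mem_sfl //.
by rewrite index_mem mem_sfl.
Qed.

Lemma fibre_inj (h h' : IFHom n m) : (forall i, fibre h i = fibre h' i) -> h = h'.
Proof.
move=> E.
have Hs i : sfl h i = sfl h' i by rewrite -!fibre_fst E.
have Ht x : tgt h' x = tgt h x.
  by apply/eqP; rewrite -mem_sfl -Hs mem_sfl.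
apply: val_inj; apply/ffunP => x; rewrite !valE Ht.
have -> : pos h' x = pos h x by apply: val_inj; rewrite /= !pos_index Ht Hs.
by rewrite lab_nth (lab_nth h') Ht Hs E.
Qed.

End Uniq.

Section Construct.
Variables n m : nat.
Variable W : 'I_m.+1 -> seq ('I_n.+1 * bool).
Hypothesis HW : perm_eq (map fst (flatten [seq W i | i <- enum 'I_m.+1])) (enum 'I_n.+1).

Let Wf i := map fst (W i).

Let Uflat : uniq (flatten [seq Wf i | i <- enum 'I_m.+1]).
Proof.
have -> : flatten [seq Wf i | i <- enum 'I_m.+1] = map fst (flatten [seq W i | i <- enum 'I_m.+1]).
  by rewrite map_flatten -map_comp.
by rewrite (perm_uniq HW) enum_uniq.
Qed.


Let Wmem x : exists i, x \in Wf i.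
Proof.
have : x \in flatten [seq Wf i | i <- enum 'I_m.+1].
  have -> : flatten [seq Wf i | i <- enum 'I_m.+1] = map fst (flatten [seq W i | i <- enum 'I_m.+1]).
    by rewrite map_flatten -map_comp.
  by rewrite (perm_mem HW) mem_enum.
by case/flattenP => s /mapP [i _ ->]; exists i.
Qed.

Let Wblock x i j : x \in Wf i -> x \in Wf j -> i = j.
Proof. by apply: (flatten_uniq_blocks Uflat); rewrite mem_enum. Qed.

Let Wuniq i : uniq (Wf i).
Proof. by apply: (flatten_uniq_block Uflat); rewrite mem_enum. Qed.

Let Wsize i : (size (Wf i) <= n.+1)%N.
Proof.
have := uniq_leq_size (Wuniq i) (s2 := enum 'I_n.+1).
by rewrite size_enum_ord; apply => x; rewrite mem_enum.
Qed.

Let tg x := odflt ord0 [pick i | x \in Wf i].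

Let tgP x : x \in Wf (tg x).
Proof.
rewrite /tg; case: pickP => [i //|none].
by have [i Hi] := Wmem x; move: (none i); rewrite Hi.
Qed.

Let tg_eq x i : x \in Wf i -> tg x = i.
Proof. by move=> Hi; apply: (Wblock (tgP x) Hi). Qed.

Let ps x : 'I_n.+1 := inord (index x (Wf (tg x))).

Let psE x : nat_of_ord (ps x) = index x (Wf (tg x)).
Proof.
rewrite inordK //; apply: (leq_trans _ (Wsize (tg x))).
by rewrite index_mem.
Qed.

Let lb x := nth false (map snd (W (tg x))) (index x (Wf (tg x))).

Let dW := [ffun x => (tg x, lb x, ps x)].

Let dW_mor : is_mor dW.
Proof.
apply/andP; split.
  apply/forallP => x; apply/forallP => y; apply/implyP; rewrite !ffunE /=.
  move=> /andP [/eqP et /eqP ep]; apply/eqP.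
  have ei : index x (Wf (tg x)) = index y (Wf (tg y)) by rewrite -!psE ep.
  by rewrite -(nth_index x (tgP x)) -(nth_index x (tgP y)) ei et.
apply/forallP => x; rewrite !ffunE /=.
have -> : #|[pred y | (dW y).1.1 == tg x]| = #|Wf (tg x)|.
  apply: eq_card => y; rewrite !inE ffunE /=; apply/eqP/idP => [<-|]; first exact: tgP.
  exact: tg_eq.
by rewrite (card_uniqP (Wuniq _)) psE index_mem.
Qed.

Definition build_IF : IFHom n m := exist _ dW dW_mor.

Lemma build_IF_spec i : fibre build_IF i = W i.
Proof.
have Et x : tgt build_IF x = tg x by rewrite /tgt /= ffunE.
have El x : lab build_IF x = lb x by rewrite /lab /= ffunE.
have Ep x : nat_of_ord (pos build_IF x) = index x (Wf (tg x)) by rewrite /pos /= ffunE /= psE.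
have Es : sfl build_IF i = Wf i.
  apply: seq_eq_index; rewrite ?uniq_sfl //.
    by move=> x; rewrite mem_sfl Et; apply/eqP/idP => [<-|]; [exact: tgP | exact: tg_eq].
  move=> x; rewrite mem_sfl Et => /eqP e.
  by rewrite -{1}e -Et -pos_index Ep e.
rewrite fibreE Es.
have sz : size (Wf i) = size (W i) by rewrite size_map.
apply: (eq_from_nth (x0 := (ord0, false))); first by rewrite size_map.
move=> j; rewrite size_map => lj.
rewrite (nth_map ord0) // El.
have mj : nth ord0 (Wf i) j \in Wf i by rewrite mem_nth.
rewrite /lb (tg_eq mj) index_uniq //.
rewrite /Wf (nth_map (ord0, false)) -?sz // (nth_map (ord0, false)) -?sz //.
by case: (nth _ (W i) j).
Qed.

End Construct.

Lemma build_exists n m (W : 'I_m.+1 -> seq ('I_n.+1 * bool)) :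
  perm_eq (map fst (flatten [seq W i | i <- enum 'I_m.+1])) (enum 'I_n.+1) ->
  exists h : IFHom n m, forall i, fibre h i = W i.
Proof. by move=> HW; exists (build_IF HW); apply: build_IF_spec. Qed.

Definition o0 : 'I_3 := @Ordinal 3 0 isT.
Definition o1 : 'I_3 := @Ordinal 3 1 isT.
Definition o2 : 'I_3 := @Ordinal 3 2 isT.

Lemma ord3P (P : 'I_3 -> Prop) : P o0 -> P o1 -> P o2 -> forall x, P x.
Proof.
move=> h0 h1 h2 [[|[|[|j]]] p] //.
- by rewrite (bool_irrelevance p (isT : (0 < 3)%N)).
- by rewrite (bool_irrelevance p (isT : (1 < 3)%N)).
- by rewrite (bool_irrelevance p (isT : (2 < 3)%N)).
Qed.

Lemma sfl_mu2 : sfl (mu 2) ord0 = [:: o0; o1; o2].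
Proof.
apply: seq_eq_index; rewrite ?uniq_sfl //.
  by apply: ord3P; rewrite mem_sfl /tgt /= ffunE.
move=> x _; rewrite (_ : ord0 = tgt (mu 2) x) -?pos_index; last by rewrite /tgt /= ffunE.
by move: x; apply: ord3P; rewrite /pos /= ffunE.
Qed.

Lemma sfl_nu : sfl nu ord0 = [:: o2; o1; o0].
Proof.
apply: seq_eq_index; rewrite ?uniq_sfl //.
  by apply: ord3P; rewrite mem_sfl /tgt /= ffunE.
move=> x _; rewrite (_ : ord0 = tgt nu x) -?pos_index; last by rewrite /tgt /= ffunE.
by move: x; apply: ord3P; rewrite /pos /= ffunE.
Qed.

Lemma fibre_mu2 : fibre (mu 2) ord0 = [:: (o0, false); (o1, false); (o2, false)].
Proof. by rewrite fibreE sfl_mu2 /= /lab /= !ffunE. Qed.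

Lemma fibre_nu : fibre nu ord0 = [:: (o2, false); (o1, true); (o0, false)].
Proof. by rewrite fibreE sfl_nu /= /lab /= !ffunE. Qed.

Lemma enum_I1 : enum 'I_1 = [:: ord0].
Proof. by apply: (inj_map val_inj); rewrite val_enum_ord. Qed.

Lemma flat3 (T : Type) (F : 'I_3 -> seq T) (Wn : nat -> seq T) :
  (forall i : 'I_3, F i = Wn i) -> flatten [seq F i | i <- enum 'I_3] = Wn 0%N ++ Wn 1%N ++ Wn 2%N.
Proof.
move=> Hg; rewrite (eq_map Hg) (map_comp Wn val) val_enum_ord /=.
by rewrite cats0.
Qed.

Section Comp.
Variable n : nat.
Variable g : IFHom n 2.
Variable Wn : nat -> seq ('I_n.+1 * bool).
Hypothesis Hg : forall i : 'I_3, fibre g i = Wn i.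

Lemma comp_mu : comp_fibres (mu 2) g = [:: Wn 0%N ++ Wn 1%N ++ Wn 2%N].
Proof. by rewrite /comp_fibres enum_I1 /= fibre_mu2 /= !Hg cats0. Qed.

Lemma comp_nu : comp_fibres nu g = [:: Wn 2%N ++ twist (Wn 1%N) ++ Wn 0%N].
Proof. by rewrite /comp_fibres enum_I1 /= fibre_nu /= !Hg cats0. Qed.
End Comp.

Section Valid.
Variable n : nat.
Definition valid (w : seq ('I_n.+1 * bool)) := perm_eq (map fst w) (enum 'I_n.+1).

Lemma fibre_valid m (h : IFHom n m) :
  perm_eq (map fst (flatten [seq fibre h i | i <- enum 'I_m.+1])) (enum 'I_n.+1).
Proof.
rewrite map_flatten -map_comp (eq_map (fibre_fst h)).
apply: uniq_perm; rewrite ?enum_uniq //; last first.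
  move=> x; rewrite mem_enum; apply/flattenP; exists (sfl h (tgt h x)).
    by apply: map_f; rewrite mem_enum.
  by rewrite mem_sfl.
have : uniq (enum 'I_m.+1) by rewrite enum_uniq.
elim: (enum 'I_m.+1) => [|a r IH] //= /andP [ar ur].
rewrite cat_uniq uniq_sfl IH // andbT /=.
apply/hasP => [[x /flattenP [s /mapP [j jr ->]]]].
rewrite !mem_sfl => /eqP ej /eqP ea.
by move: ar; rewrite -ea ej jr.
Qed.

Lemma valid_perm w w' : perm_eq (map fst w) (map fst w') -> valid w' -> valid w.
Proof. by move=> p v; apply: perm_trans p v. Qed.

Lemma valid_fibre0 (h : IFHom n 0) : valid (fibre h ord0).
Proof. by have := fibre_valid h; rewrite enum_I1 /= cats0. Qed.

Lemma fibres0 (h : IFHom n 0) : fibres h = [:: fibre h ord0].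
Proof. by rewrite /fibres enum_I1. Qed.

Lemma fibre0_inj (h h' : IFHom n 0) : fibre h ord0 = fibre h' ord0 -> h = h'.
Proof. by move=> e; apply: fibre_inj => i; rewrite (ord1 i). Qed.

Definition Hw (w : seq ('I_n.+1 * bool)) : IFHom n 0 :=
  odflt (mu n) [pick h : IFHom n 0 | fibre h ord0 == w].

Lemma HwP w : valid w -> fibre (Hw w) ord0 = w.
Proof.
move=> v.
have [h Hh] : exists h : IFHom n 0, forall i, fibre h i = w.
  by apply: (build_exists (W := fun _ => w)); rewrite enum_I1 /= cats0.
rewrite /Hw; case: pickP => [h' /eqP //|none].
by move: (none h); rewrite Hh eqxx.
Qed.

Lemma Hw_eq w (h : IFHom n 0) : valid w -> (fibre h ord0 == w) = (h == Hw w).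
Proof.
move=> v; apply/eqP/eqP => [e|->]; last exact: HwP.
by apply: fibre0_inj; rewrite HwP.
Qed.

Lemma Hw_fibre (h : IFHom n 0) : Hw (fibre h ord0) = h.
Proof. by apply: fibre0_inj; rewrite HwP // valid_fibre0. Qed.

Lemma gen1 (k : pzRingType) w (h : IFHom n 0) : valid w ->
  @gen_of_fibres k n [:: w] h = ((h == Hw w)%:R : k).
Proof.
move=> v; rewrite ffunE fibres0.
by rewrite eqseq_cons andbT Hw_eq.
Qed.

End Valid.

Lemma map_twist (T : Type) (B : seq (T * bool)) : map fst (twist B) = rev (map fst B).
Proof. by rewrite /twist map_rev -map_comp. Qed.

Ltac permtac := apply/permP => ?; rewrite /= ?map_cat ?map_twist /= ?count_cat ?count_rev /=; lia.

Section Main.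
Variable k : comPzRingType.
Variable n : nat.
Notation word := (seq ('I_n.+1 * bool)).

Definition ee (h : IFHom n 0) : {ffun IFHom n 0 -> k} := [ffun h' => ((h' == h)%:R : k)].

Lemma rhoD d1 d2 : rhoIF (d1 + d2) = rhoIF d1 + rhoIF d2 :> {ffun IFHom n 0 -> k}.
Proof. by apply/ffunP => h; rewrite !ffunE -big_split; apply: eq_bigr => g _; rewrite ffunE mulrDl. Qed.

Lemma rhoN d : rhoIF (- d) = - rhoIF d :> {ffun IFHom n 0 -> k}.
Proof. by apply/ffunP => h; rewrite !ffunE -sumrN; apply: eq_bigr => g _; rewrite ffunE mulNr. Qed.

Lemma rho0 : rhoIF 0 = 0 :> {ffun IFHom n 0 -> k}.
Proof. by apply/ffunP => h; rewrite !ffunE big1 // => g _; rewrite ffunE mul0r. Qed.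

Lemma rhoM a (d : {ffun IFHom n 2 -> k}) : rhoIF [ffun g => a * d g] = [ffun h => a * rhoIF d h] :> {ffun IFHom n 0 -> k}.
Proof. by apply/ffunP => h; rewrite !ffunE mulr_sumr; apply: eq_bigr => g _; rewrite ffunE mulrA. Qed.

Definition wc (w w' : word) := exists d : {ffun IFHom n 2 -> k}, rhoIF d = ee (Hw w) - ee (Hw w').

Lemma wc_refl w : wc w w.
Proof. by exists 0; rewrite rho0 subrr. Qed.

Lemma wc_sym w w' : wc w w' -> wc w' w.
Proof. by case=> d hd; exists (- d); rewrite rhoN hd opprB. Qed.

Lemma wc_trans w1 w2 w3 : wc w1 w2 -> wc w2 w3 -> wc w1 w3.
Proof.
case=> d1 h1 [d2 h2]; exists (d1 + d2).
by rewrite rhoD h1 h2 addrA subrK.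
Qed.

Lemma edge (A B C : word) : valid (A ++ B ++ C) -> wc (A ++ B ++ C) (C ++ twist B ++ A).
Proof.
move=> v.
pose Wn (j : nat) := if j == 0%N then A else if j == 1%N then B else C.
have [g Hg] : exists g : IFHom n 2, forall i, fibre g i = Wn i.
  by apply: build_exists; rewrite (flat3 (Wn := Wn)).
have v2 : valid (C ++ twist B ++ A) by apply: valid_perm v; permtac.
exists [ffun g' => ((g' == g)%:R : k)].
apply/ffunP => h; rewrite !ffunE (bigD1 g) //= big1 ?addr0; last first.
  by move=> g' /negbTE ne; rewrite ffunE ne mul0r.
rewrite ffunE eqxx mul1r (comp_mu Hg) (comp_nu Hg) /=.
by rewrite !gen1 // !ffunE.
Qed.

Lemma rot (A C : word) : valid (A ++ C) -> wc (A ++ C) (C ++ A).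
Proof. by move=> v; have := @edge A [::] C; rewrite /= /twist /=; apply. Qed.

Lemma flip_front p (L : word) : valid (p :: L) -> wc (p :: L) ((p.1, ~~ p.2) :: L).
Proof.
move=> v; apply: (wc_trans (w2 := L ++ [:: (p.1, ~~ p.2)])).
  by have := @edge [::] [:: p] L; rewrite /= /twist /=; apply.
apply: (rot (A := L) (C := [:: (p.1, ~~ p.2)])).
by apply: valid_perm v; permtac.
Qed.

Lemma flip X p Y : valid (X ++ p :: Y) -> wc (X ++ p :: Y) (X ++ (p.1, ~~ p.2) :: Y).
Proof.
move=> v; apply: (wc_trans (rot v)).
have v1 : valid (p :: (Y ++ X)) by apply: valid_perm v; permtac.
apply: (wc_trans (flip_front v1)).
apply: wc_sym; apply: (rot (A := X) (C := (p.1, ~~ p.2) :: Y)).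
by apply: valid_perm v; permtac.
Qed.

Lemma flip_any X p b Y : valid (X ++ p :: Y) -> wc (X ++ p :: Y) (X ++ (p.1, b) :: Y).
Proof.
move=> v; case: (boolP (b == p.2)) => [/eqP ->|nb].
  by case: p v => ? ?; rewrite /=; move=> _; apply: wc_refl.
by rewrite (_ : b = ~~ p.2); [apply: flip | move: nb; case: b; case: (p.2)].
Qed.

Lemma swap_front a b (C : word) : valid (a :: b :: C) -> wc (a :: b :: C) (b :: a :: C).
Proof.
move=> v.
apply: (wc_trans (w2 := C ++ [:: (b.1, ~~ b.2); a])).
  by have := @edge [:: a] [:: b] C; rewrite /= /twist /=; apply.
apply: (wc_trans (w2 := (b.1, ~~ b.2) :: a :: C)).
  by apply: (rot (A := C) (C := [:: (b.1, ~~ b.2); a])); apply: valid_perm v; permtac.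
have := @flip_front (b.1, ~~ b.2) (a :: C); rewrite /= negbK; case: b v => ? ? v; apply.
by apply: valid_perm v; permtac.
Qed.

Lemma swap X a b Y : valid (X ++ a :: b :: Y) -> wc (X ++ a :: b :: Y) (X ++ b :: a :: Y).
Proof.
move=> v; apply: (wc_trans (rot v)).
have v1 : valid (a :: b :: (Y ++ X)) by apply: valid_perm v; permtac.
apply: (wc_trans (swap_front v1)).
apply: wc_sym; apply: (rot (A := X) (C := b :: a :: Y)).
by apply: valid_perm v; permtac.
Qed.

Lemma move_q q (Y1 : word) : forall X Y2, valid (X ++ q :: Y1 ++ Y2) ->
  wc (X ++ q :: Y1 ++ Y2) (X ++ Y1 ++ q :: Y2).
Proof.
elim: Y1 => [|y Y1 IH] X Y2 v; first exact: wc_refl.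
apply: (wc_trans (swap v)).
have := IH (X ++ [:: y]) Y2; rewrite -!catA /=; apply.
by apply: valid_perm v; permtac.
Qed.

Lemma conn (L : word) : forall X L', valid (X ++ L) -> perm_eq (map fst L) (map fst L') ->
  wc (X ++ L) (X ++ L').
Proof.
elim: L => [|p L IH] X L' v pe.
  by case: L' pe => [|? ?] pe; [apply: wc_refl | move: (perm_size pe)].
have mp : p.1 \in map fst L' by rewrite -(perm_mem pe) in_cons eqxx.
set i := index p.1 (map fst L').
have li : (i < size L')%N by rewrite -(size_map fst) index_mem.
set q := nth p L' i.
have eq1 : q.1 = p.1 by rewrite /q -(nth_map p p.1) // nth_index.
have eL : L' = take i L' ++ q :: drop i.+1 L' by rewrite -drop_nth // cat_take_drop.
rewrite eL; set Y1 := take i L'; set Y2 := drop i.+1 L'.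
have pe2 : perm_eq (map fst L) (map fst (Y1 ++ Y2)).
  rewrite -(perm_cons p.1); apply: (perm_trans pe); rewrite eL -eq1.
  by rewrite /Y1 /Y2; permtac.
apply: (wc_trans (w2 := X ++ q :: L)).
  have -> : q = (p.1, q.2) by rewrite -eq1; case: (q).
  exact: flip_any.
have vq : valid (X ++ q :: L) by apply: valid_perm v; rewrite !map_cat /= eq1.
apply: (wc_trans (w2 := X ++ q :: Y1 ++ Y2)).
  by have := IH (X ++ [:: q]) (Y1 ++ Y2); rewrite -!catA /=; apply.
apply: move_q; apply: valid_perm vq.
move: pe2; rewrite !map_cat /= => pe2.
by rewrite perm_cat2l perm_cons map_cat perm_sym.
Qed.

End Main.

Lemma sum_gen1 (k : comPzRingType) n (w : seq ('I_n.+1 * bool)) : valid w ->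
  \sum_(h : IFHom n 0) @gen_of_fibres k n [:: w] h = 1.
Proof.
move=> v; rewrite (eq_bigr _ (fun h _ => gen1 k h v)).
rewrite (bigD1 (Hw w)) //= eqxx big1 ?addr0 // => h /negbTE ->.
by [].
Qed.

Lemma eps_rho (k : comPzRingType) n (d : {ffun IFHom n 2 -> k}) : epsIF (rhoIF d) = 0.
Proof.
rewrite /epsIF (eq_bigr _ (fun h _ => ffunE _ h)) exchange_big /=.
apply: big1 => g _.
pose Wn (j : nat) := fibre g (inord j).
have Hg : forall i : 'I_3, fibre g i = Wn i by move=> i; rewrite /Wn inord_val.
have v1 : valid (Wn 0%N ++ Wn 1%N ++ Wn 2%N).
  by have := fibre_valid g; rewrite (flat3 Hg).
have v2 : valid (Wn 2%N ++ twist (Wn 1%N) ++ Wn 0%N) by apply: valid_perm v1; permtac.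
rewrite -mulr_sumr sumrB (comp_mu Hg) (comp_nu Hg) !sum_gen1 //.
by rewrite subrr mulr0.
Qed.

Theorem lemma5p3 (k : comPzRingType) (n : nat) :
  (forall a : k, exists c : {ffun IFHom n 0 -> k}, epsIF c = a) /\
  (forall c : {ffun IFHom n 0 -> k},
      epsIF c = 0 <-> exists d : {ffun IFHom n 2 -> k}, rhoIF d = c).
Proof.
split.
  move=> a; exists [ffun h => if h == mu n then a else 0].
  rewrite /epsIF (bigD1 (mu n)) //= ffunE eqxx big1 ?addr0 // => h /negbTE ne.
  by rewrite ffunE ne.
move=> c; split; last by case=> d <-; apply: eps_rho.
move=> c0.
have connh : forall h : IFHom n 0, exists d, rhoIF d = ee k h - ee k (mu n).
  move=> h.
  have := @conn k n (fibre h ord0) [::] (fibre (mu n) ord0) (valid_fibre0 h).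
  rewrite /wc /= !Hw_fibre; apply.
  apply: (perm_trans (valid_fibre0 h)); rewrite perm_sym; exact: valid_fibre0.
have -> : c = \sum_(h : IFHom n 0) [ffun h' => c h * (ee k h - ee k (mu n)) h'].
  apply/ffunP => h'; rewrite sum_ffunE.
  rewrite (eq_bigr (fun h => c h * (h' == h)%:R - (h' == mu n)%:R * c h)); last first.
    by move=> h _; rewrite !ffunE mulrBr; congr (_ - _); exact: mulrC.
  rewrite sumrB -mulr_sumr.
  rewrite (_ : \sum_(i : IFHom n 0) c i = epsIF c) // c0 mulr0 subr0.
  rewrite (bigD1 h') //= eqxx mulr1 big1 ?addr0 // => h /negbTE.
  by rewrite eq_sym => ->; rewrite mulr0.
apply: (big_ind (fun v => exists d, rhoIF d = v)).
- by exists 0; rewrite rho0.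
- by move=> v1 v2 [d1 <-] [d2 <-]; exists (d1 + d2); rewrite rhoD.
- move=> h _; have [d hd] := connh h.
  exists [ffun g => c h * d g]; rewrite rhoM hd; apply/ffunP => h'.
  by rewrite !ffunE.
Qed.
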